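(* Let $k\ge2$ and let $\tau(x,y,h,b_1)$ be the formula $\alpha(x)\wedge\alpha(y)\wedge([h,b_1]=e)\wedge\beta(b_1)\wedge\forall v\,\forall w\,\big([v,b_1]=[w,b_1]=e\wedge\gamma(h,v,w,b_1)\rightarrow\exists u\,(\alpha(u)\wedge[v,y]=[w,x][v,[u,v]])\big)$, where $\alpha(x)=\forall y\,([y^{-1}xy,x]=e)$, $\beta(y)=\forall x\,(\alpha(x)\rightarrow y^{-1}xy=x^k)$, and $\gamma(x,y,z,t)$ is a group formula such that for every $b_1\in Ab$ and all $n,l,m\in\mathbb{Z}$, $BS(1,k)\models\gamma(b_1^n,b_1^l,b_1^m,b_1)$ iff $nl=m$. If $a_1\in A$ and $b_1\in Ab$, then for all $u,h\in BS(1,k)$: $BS(1,k)\models\tau(a_1,u,h,b_1)$ if and only if there exists $z\in\mathbb{Z}$ with $u=a_1^z$ and $h=b_1^z$.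
   Context: $BS(1,k)=\langle a,b\mid b^{-1}ab=a^k\rangle$, identified with $\mathbb{Z}[1/k]\rtimes\mathbb{Z}$ (pairs $(y,m)$, $y\in\mathbb{Z}[1/k]=\{zk^i:z,i\in\mathbb{Z}\}$, product $(y_1,m_1)(y_2,m_2)=(y_1+y_2k^{-m_1},m_1+m_2)$), with $a=(1,0)$, $b=(0,1)$; $a^y=(y,0)$. $A=\{a^y: y\in\mathbb{Z}[1/k]\}$ (the normal closure of $a$) and $Ab=\{a^yb:y\in\mathbb{Z}[1/k]\}$. The commutator is $[x,y]=x^{-1}y^{-1}xy$. *)

(* Defs.v *)
(* BS(1,k) = Z[1/k] ⋊ Z realised concretely on rat * int. *)
From HB Require Import structures.
From mathcomp Require Import all_boot all_order all_algebra.
Set Implicit Arguments. Unset Strict Implicit. Unset Printing Implicit Defensive.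
Import Order.TTheory GRing.Theory Num.Theory.
Local Open Scope ring_scope.

(* ambient carrier; the group BS(1,k) is the subset [BSel k] *)
Definition G : Type := (rat * int)%type.

Definition Zk (k : nat) (y : rat) : Prop :=
  exists (z i : int), y = z%:~R * (k%:R : rat) ^ i.

Definition BSel (k : nat) (g : G) : Prop := Zk k g.1.

Definition bsmul (k : nat) (g h : G) : G :=
  (g.1 + h.1 * (k%:R : rat) ^ (- g.2), g.2 + h.2).
Definition bsone : G := (0, 0).
Definition bsinv (k : nat) (g : G) : G :=
  (- (g.1 * (k%:R : rat) ^ g.2), - g.2).

Definition bspow (k : nat) (g : G) (n : int) : G :=
  match n with
  | Posz m => iter m (bsmul k g) bsone
  | Negz m => bsinv k (iter m.+1 (bsmul k g) bsone)
  end.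

Definition bscomm (k : nat) (x y : G) : G :=
  bsmul k (bsmul k (bsinv k x) (bsinv k y)) (bsmul k x y).
Definition bsconj (k : nat) (x y : G) : G :=
  bsmul k (bsmul k (bsinv k y) x) y.

Definition bs_a (y : rat) : G := (y, 0).
Definition bs_b : G := (0, 1).

Definition InA (k : nat) (g : G) : Prop := exists y, Zk k y /\ g = bs_a y.
Definition InAb (k : nat) (g : G) : Prop :=
  exists y, Zk k y /\ g = bsmul k (bs_a y) bs_b.

Definition alpha (k : nat) (x : G) : Prop :=
  forall y, BSel k y -> bscomm k (bsconj k x y) x = bsone.

Definition beta (k : nat) (y : G) : Prop :=
  forall x, BSel k x -> alpha k x -> bsconj k x y = bspow k x (Posz k).

Definition tau (k : nat) (gamma : G -> G -> G -> G -> Prop) (x y h b1 : G) : Prop :=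
  alpha k x /\ alpha k y /\ bscomm k h b1 = bsone /\ beta k b1 /\
  (forall v, BSel k v -> forall w, BSel k w ->
     bscomm k v b1 = bsone -> bscomm k w b1 = bsone -> gamma h v w b1 ->
     exists u, BSel k u /\ alpha k u /\
       bscomm k v y = bsmul k (bscomm k w x) (bscomm k v (bscomm k u v))).

(* Main.v *)
Require Import Defs.
From mathcomp Require Import all_boot all_order all_algebra.
From mathcomp Require Import ring zify.
Import GRing.Theory Num.Theory.
Local Open Scope ring_scope.

Lemma int_ind3 (P : int -> Prop) : P 0 -> (forall z, P z -> P (z+1)) ->
  (forall z, P z -> P (z-1)) -> forall z, P z.
Proof.
move=> P0 Hs Hp; case=> n.
  elim: n => // n IH; have -> : Posz n.+1 = Posz n + 1 by lia. exact: Hs.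
elim: n => [|n IH].
  have -> : Negz 0 = 0 - 1 by lia.
  exact: Hp.
have -> : Negz n.+1 = Negz n - 1 by lia. exact: Hp.
Qed.

Section BS.
Variable k : nat.
Hypothesis hk : (2 <= k)%N.
Local Notation K := (k%:R : rat).

Lemma K_gt1 : 1 < K. Proof. by rewrite ltr1n. Qed.
Lemma K_neq0 : K != 0. Proof. by rewrite pnatr_eq0; case: k hk. Qed.
Lemma K_neq1 : K != 1. Proof. by rewrite pnatr_eq1; case: k hk => [|[]]. Qed.
Lemma expK_neq0 (i : int) : K ^ i != 0. Proof. exact: expfz_neq0 K_neq0. Qed.

Lemma expK_eq1 (i : int) : K ^ i = 1 -> i = 0.
Proof.
case: i => n /=.
  move=> /eqP; rewrite pexprn_eq1 ?ler0n // (negbTE K_neq1) orbF => /eqP -> //.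
move=> /eqP; rewrite invr_eq1 pexprn_eq1 ?ler0n // (negbTE K_neq1) //.
Qed.

Lemma ZkP y : Zk k y <-> exists n : nat, y * K ^+ n \is a Num.int.
Proof.
split.
  case=> z [i ->]; case: i => n.
    by exists 0%N; rewrite expr0 mulr1 rpredM ?intr_int // rpredX // natr_int.
  exists n.+1; rewrite /= mulfVK ?intr_int //; exact: expf_neq0 K_neq0.
case=> n /intrP [z Hz]; exists z, (- (n : int)).
rewrite -exprnN -Hz mulfK //; exact: expf_neq0 K_neq0.
Qed.

Lemma Zk_int (z : int) : Zk k z%:~R.
Proof. by exists z, 0; rewrite expr0z mulr1. Qed.

Lemma Zk_K (i : int) : Zk k (K ^ i).
Proof. by exists 1, i; rewrite mul1r. Qed.

Lemma Zk_add x y : Zk k x -> Zk k y -> Zk k (x + y).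
Proof.
move=> /ZkP [n Hn] /ZkP [m Hm]; apply/ZkP; exists (n + m)%N.
have -> : (x + y) * K ^+ (n + m) = (x * K^+n) * K^+m + (y * K^+m) * K^+n.
  by rewrite exprD; ring.
by rewrite rpredD // rpredM // rpredX // natr_int.
Qed.

Lemma Zk_mul x y : Zk k x -> Zk k y -> Zk k (x * y).
Proof.
move=> /ZkP [n Hn] /ZkP [m Hm]; apply/ZkP; exists (n + m)%N.
have -> : (x * y) * K ^+ (n + m) = (x * K^+n) * (y * K^+m).
  by rewrite exprD; ring.
by rewrite rpredM.
Qed.

Lemma Zk_opp x : Zk k x -> Zk k (- x).
Proof. by case=> z [i ->]; exists (- z), i; rewrite rmorphN mulNr. Qed.

Lemma Zk_sub x y : Zk k x -> Zk k y -> Zk k (x - y).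
Proof. by move=> ??; apply: Zk_add => //; apply: Zk_opp. Qed.


Lemma bscommE x y : bscomm k x y =
  (x.1 * (K^(x.2+y.2) - K^x.2) + y.1*(K^y.2 - K^(x.2+y.2)), 0).
Proof.
case: x => a m; case: y => b n; rewrite /bscomm /bsmul /bsinv /=.
congr pair; last by ring.
rewrite !opprK opprD !opprK !expfzDr ?K_neq0 // -!invr_expz.
have := expK_neq0 m; have := expK_neq0 n => H1 H2.
by field.
Qed.

Lemma bsmulA0 a b : bsmul k (a, 0) (b, 0) = (a + b, 0).
Proof. by rewrite /bsmul /= oppr0 expr0z mulr1 addr0. Qed.

Lemma commVA p l t : bscomm k (p, l) (t, 0) = (t * (1 - K^l), 0).
Proof. rewrite bscommE /= addr0 subrr mulr0 add0r expr0z //. Qed.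

Lemma commAV s p l : bscomm k (s, 0) (p, l) = (s * (K^l - 1), 0).
Proof. rewrite bscommE /= add0r subrr mulr0 addr0 expr0z //. Qed.

Lemma bspowA c n : bspow k (c, 0) n = (c * n%:~R, 0).
Proof.
have HP m : iter m (bsmul k (c, 0)) bsone = (c * m%:R, 0).
  elim: m => [|m IH]; first by rewrite /= mulr0.
  by rewrite iterS IH bsmulA0 mulrSr mulrDr mulr1 addrC.
case: n => m /=; first by rewrite HP.
rewrite HP /bsinv /= expr0z mulr1 oppr0; congr pair.
by rewrite NegzE rmorphN /= mulr1 mulrN -pmulrn mulrS mulrDr mulr1.
Qed.

Lemma bspowB y n : bspow k (y, 1) n = (y * (1 - (K^n)^-1) / (1 - K^-1), n).
Proof.
have HK : 1 - K^-1 != 0.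
  rewrite subr_eq0 eq_sym invr_eq1; exact: K_neq1.
have HP m : iter m (bsmul k (y, 1)) bsone = (y * (1 - (K^+m)^-1) / (1 - K^-1), Posz m).
  elim: m => [|m IH]; first by rewrite /= expr0 invr1 subrr mulr0 mul0r.
  rewrite iterS IH /bsmul /=; congr pair.
  rewrite exprN1 exprS invfM.
  have := expf_neq0 m K_neq0 => H1.
  field; by rewrite K_neq0 H1 subr_eq0 K_neq1.
case: n => m; rewrite /bspow HP //.
rewrite /bsinv /=; congr pair.
have := expf_neq0 m.+1 K_neq0 => H1.
rewrite invrK; change (K ^ (Posz m.+1)) with (K ^+ m.+1).
field; by rewrite K_neq0 H1 subr_eq0 K_neq1.
Qed.

Lemma BSel_mul x y : BSel k x -> BSel k y -> BSel k (bsmul k x y).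
Proof. by move=> Hx Hy; apply: Zk_add => //; apply: Zk_mul => //; apply: Zk_K. Qed.

Lemma BSel_inv x : BSel k x -> BSel k (bsinv k x).
Proof. by move=> Hx; apply: Zk_opp; apply: Zk_mul => //; apply: Zk_K. Qed.

Lemma BSel_pow x n : BSel k x -> BSel k (bspow k x n).
Proof.
move=> Hx.
have HP m : BSel k (iter m (bsmul k x) bsone).
  elim: m => [|m IH]; first by rewrite /BSel /=; apply: (Zk_int 0).
  by rewrite iterS; apply: BSel_mul.
case: n => m; rewrite /bspow; [exact: HP | apply: BSel_inv; exact: HP].
Qed.

Lemma cent_b1 y h : bscomm k h (y, 1) = bsone <-> h = bspow k (y, 1) h.2.
Proof.
case: h => p n; rewrite bscommE bspowB /bsone /= expfzDr ?K_neq0 // expr1z.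
have HX := expK_neq0 n; set X := K ^ n.
have HK1 : K - 1 != 0 by rewrite subr_eq0 K_neq1.
have HXK : X * K - X != 0 by rewrite -{2}[X]mulr1 -mulrBr mulf_neq0.
split.
  case=> /eqP; rewrite addr_eq0 => /eqP E; congr pair.
  rewrite (_ : p = p * (X * K - X) / (X * K - X)); last by field.
  rewrite E; field; by rewrite HX K_neq0 HK1.
case=> ->; congr pair; field; by rewrite HX K_neq0 HK1.
Qed.

Lemma Zk1 : Zk k 1.
Proof. by exists 1, 0; rewrite expr0z mulr1. Qed.

Lemma alphaE x : BSel k x -> (alpha k x <-> x.2 = 0).
Proof.
case: x => a m /= Hx; split.
  move=> /(_ (1, 0) Zk1); rewrite /bsconj /bsinv /bsmul bscommE /=.
  rewrite !oppr0 !add0r !addr0 expr0z !mul1r => -[E].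
  apply: expK_eq1; have H : (K ^ m - 1) ^+ 2 = 0.
    rewrite -oppr0 -{}E expfzDr ?K_neq0 // -invr_expz.
    have := expK_neq0 m => H1; by field.
  by move/eqP: H; rewrite sqrf_eq0 subr_eq0 => /eqP.
move=> Hm z Hz; rewrite Hm /bsconj /bsinv /bsmul bscommE /=.
by rewrite !addr0 addNr !subrr !mulr0 addr0.
Qed.

Lemma beta_b1 y : beta k (y, 1).
Proof.
move=> x Hx /(alphaE _ Hx); case: x Hx => c m Hx /= Hm; rewrite Hm.
rewrite -[iter _ _ _]/(bspow k (c,0) (Posz k)) bspowA -pmulrn.
rewrite /bsconj /bsinv /bsmul /= !addr0 opprK expr1z; congr pair.
ring.
Qed.

Lemma Qlemma (X : rat) : X != 0 -> Zk k X -> Zk k X^-1 ->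
  forall z : int, exists p, Zk k p /\ X ^ z - 1 = (X - 1) * p.
Proof.
move=> HX0 HX HXi; apply: int_ind3.
  by exists 0; split; [apply: (Zk_int 0) | rewrite expr0z subrr mulr0].
  move=> z [p [Hp E]]; exists (X * p + 1); split.
    by apply: Zk_add; [apply: Zk_mul | apply: Zk1].
  rewrite expfzDr // expr1z.
  have -> : X ^ z = (X - 1) * p + 1 by rewrite -E; ring.
  ring.
move=> z [p [Hp E]]; exists (X^-1 * (p - 1)); split.
  by apply: Zk_mul => //; apply: Zk_sub => //; apply: Zk1.
have -> : X ^ (z - 1) = X ^ z * X^-1 by rewrite expfzDr // exprN1.
have -> : X ^ z = (X - 1) * p + 1 by rewrite -E; ring.
by field.
Qed.

Lemma divlemma (X : rat) : X != 0 -> Zk k X -> Zk k X^-1 ->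
  forall z : int, exists q, Zk k q /\
    (1 - X ^ z) - z%:~R * (1 - X) = (1 - X) ^+ 2 * q.
Proof.
move=> HX0 HX HXi; apply: int_ind3.
  by exists 0; split; [apply: (Zk_int 0) | rewrite expr0z subrr mulr0 mul0r subr0].
  move=> z [q [Hq E]]; have [p [Hp Ep]] := Qlemma _ HX0 HX HXi z.
  exists (q - p); split; first exact: Zk_sub.
  rewrite expfzDr // expr1z rmorphD /=.
  have EX : X ^ z = (X - 1) * p + 1 by rewrite -Ep; ring.
  rewrite EX in E *.
  have -> : 1 - ((X - 1) * p + 1) * X - (z%:~R + 1) * (1 - X) =
    (1 - ((X - 1) * p + 1) - z%:~R * (1 - X)) - (1 - X)^+2 * p by ring.
  rewrite E; ring.
move=> z [q [Hq E]]; have [p [Hp Ep]] := Qlemma _ HX0 HX HXi (z - 1).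
exists (q + p); split; first exact: Zk_add.
have EZ : X ^ z = X ^ (z - 1) * X by rewrite -{3}(expr1z X) -expfzDr // subrK.
rewrite EZ in E; rewrite rmorphB /=.
have EX : X ^ (z - 1) = (X - 1) * p + 1 by rewrite -Ep; ring.
rewrite EX in E *.
have -> : 1 - ((X - 1) * p + 1) - (z%:~R - 1) * (1 - X) =
    (1 - ((X - 1) * p + 1) * X - z%:~R * (1 - X)) + (1 - X)^+2 * p by ring.
rewrite E; ring.
Qed.

Lemma zero_lemma d : Zk k d ->
  (forall l : nat, (0 < l)%N -> exists r, Zk k r /\ d = (1 - K ^+ l) * r) -> d = 0.
Proof.
move=> /ZkP [n0 /intrP [z0 Hz0]] H.
have [r [/ZkP [nr /intrP [zr Hzr]] Hd]] := H (absz z0).+1 isT.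
set l := (absz z0).+1 in Hd.
suff Z0 : z0 = 0.
  apply/eqP; move: Hz0; rewrite Z0 /= => /eqP.
  by rewrite mulf_eq0 expf_eq0 (negbTE K_neq0) andbF orbF.
have Eq : (z0 * (k ^ nr)%:Z)%:~R = ((1 - (k ^ l)%:Z) * zr * (k ^ n0)%:Z)%:~R :> rat.
  rewrite !rmorphM rmorphB /= -Hz0 -Hzr -!pmulrn !natrX Hd; ring.
move/intr_inj: Eq => /(congr1 absz); rewrite !abszM.
have Hkl : (0 < k ^ l)%N by rewrite expn_gt0; case: k hk.
have -> : absz (1 - (k ^ l)%:Z) = (k ^ l - 1)%N by lia.
rewrite !absz_nat => E.
have Hdv : (k ^ l - 1 %| absz z0 * k ^ nr)%N.
  by rewrite E -mulnA dvdn_mulr.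
have Hcop : coprime (k ^ l - 1) (k ^ nr).
  apply: coprimeXr; apply: (@coprime_dvdr _ (k ^ l)).
    by apply: dvdn_exp.
  by rewrite subn1 coprimePn.
rewrite Gauss_dvdl // in Hdv.
have Hlt : (l < k ^ l)%N by apply: ltn_expl.
apply/eqP; rewrite -absz_eq0; apply/negPn/negP => Hz.
have := dvdn_leq _ Hdv; rewrite lt0n Hz => /(_ isT).
rewrite /l in Hlt *; lia.
Qed.

Lemma pow2 y n : (bspow k (y, 1) n).2 = n.
Proof. by rewrite bspowB. Qed.

Lemma main
  (gamma : G -> G -> G -> G -> Prop)
  (hgamma : forall b1 : G, BSel k b1 -> InAb k b1 ->
     forall n l m : int,
       gamma (bspow k b1 n) (bspow k b1 l) (bspow k b1 m) b1 <-> n * l = m)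
  (a1 b1 : G) (ha1 : InA k a1) (hb1 : InAb k b1)
  (u h : G) (hu : BSel k u) (hh : BSel k h) :
  tau k gamma a1 u h b1 <-> exists z : int, u = bspow k a1 z /\ h = bspow k b1 z.
Proof.
case: ha1 => c [Hc ->{a1}].
have Hb1Ab := hb1; case: hb1 => y [Hy Eb1].
have Eb : b1 = (y, 1) by rewrite Eb1 /bsmul /= mul0r addr0.
have Hb1sel : BSel k b1 by rewrite Eb.
have hg := hgamma b1 Hb1sel Hb1Ab; rewrite Eb in hg Hb1sel.
rewrite Eb; clear Eb1 Eb Hb1Ab hgamma.
have HX l : K ^ l != 0 := expK_neq0 l.
have HXZ (l : int) : Zk k (K ^ l) := Zk_K l.
have HXiZ (l : int) : Zk k ((K ^ l)^-1) by rewrite invr_expz; apply: Zk_K.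
split.
  move=> [_ [Hu [Hhb [_ Hcl]]]].
  have u2 : u.2 = 0 by apply/(alphaE _ hu).
  case: u hu Hu u2 Hcl => t m /= Ht _ Hm0 Hcl; subst m.
  have Eh := (cent_b1 y h).1 Hhb; set z := h.2 in Eh.
  exists z; split; last exact: Eh.
  rewrite bspowA; congr pair.
  apply/eqP; rewrite -subr_eq0; apply/eqP; apply: zero_lemma.
    by apply: Zk_sub => //; apply: Zk_mul => //; apply: Zk_int.
  move=> l Hl.
  have Hv : BSel k (bspow k (y, 1) l) by apply: BSel_pow.
  have Hw : BSel k (bspow k (y, 1) (z * l)) by apply: BSel_pow.
  have cv : bscomm k (bspow k (y, 1) l) (y, 1) = bsone by apply/cent_b1; rewrite pow2.
  have cw : bscomm k (bspow k (y, 1) (z * l)) (y, 1) = bsone by apply/cent_b1; rewrite pow2.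
  have gam : gamma h (bspow k (y, 1) l) (bspow k (y, 1) (z * l)) (y, 1).
    by rewrite Eh; apply/hg.
  have [u' [Hu's [Hu'a Eq]]] := Hcl _ Hv _ Hw cv cw gam.
  have u'2 : u'.2 = 0 by apply/(alphaE _ Hu's).
  case: u' Hu's Hu'a u'2 Eq => s m /= Hs _ Hm0 Eq; subst m.
  move: Eq; rewrite -[iter l _ _]/(bspow k (y,1) (Posz l)) /bs_a !bspowB commAV !commVA bsmulA0 => -[E1].
  have [q [Hq Eq]] := divlemma _ (HX l) (HXZ l) (HXiZ l) z.
  exists (c * q - s); split.
    by apply: Zk_sub => //; apply: Zk_mul.
  have HX1 : 1 - K ^ l != 0.
    rewrite subr_eq0 eq_sym; apply/eqP => /expK_eq1 [] Hl0.
    by rewrite Hl0 in Hl.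
  change (K ^+ l) with (K ^ (Posz l)).
  apply: (mulIf HX1); rewrite mulrBl E1.
  have -> : K ^ (z * Posz l) = (K ^ Posz l) ^ z by rewrite exprz_exp mulrC.
  have -> : c * (1 - (K ^ Posz l) ^ z) =
     c * (z%:~R * (1 - K ^ Posz l) + (1 - K ^ Posz l) ^+ 2 * q) by rewrite -Eq; ring.
  ring.
case=> z [-> ->]; rewrite /tau /bs_a bspowA.
split; first by apply/(alphaE (c, 0) Hc).
split; first by apply/alphaE => //; apply: Zk_mul => //; apply: Zk_int.
split; first by apply/cent_b1; rewrite pow2.
split; first exact: beta_b1.
move=> [p l] Hv [pw m] Hw cv cw gam.
have Ev := (cent_b1 y (p, l)).1 cv; have Ew := (cent_b1 y (pw, m)).1 cw.
rewrite /= in Ev Ew; rewrite Ev Ew in gam.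
have Hm := (hg z l m).1 gam.
have [q [Hq Eq]] := divlemma _ (HX l) (HXZ l) (HXiZ l) z.
exists (c * q, 0); split; first exact: Zk_mul.
split; first by apply/alphaE => //; apply: Zk_mul.
rewrite commAV !commVA bsmulA0; congr pair.
rewrite -Hm.
have -> : K ^ (z * l) = (K ^ l) ^ z by rewrite exprz_exp mulrC.
have -> : c * (1 - (K ^ l) ^ z) =
   c * (z%:~R * (1 - K ^ l) + (1 - K ^ l) ^+ 2 * q) by rewrite -Eq; ring.
ring.
Qed.

End BS.

Theorem corollary4p9 (k : nat) (hk : (2 <= k)%N)
  (gamma : G -> G -> G -> G -> Prop)
  (hgamma : forall b1 : G, BSel k b1 -> InAb k b1 ->
     forall n l m : int,
       gamma (bspow k b1 n) (bspow k b1 l) (bspow k b1 m) b1 <-> n * l = m)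
  (a1 b1 : G) (ha1 : InA k a1) (hb1 : InAb k b1)
  (u h : G) (hu : BSel k u) (hh : BSel k h) :
  tau k gamma a1 u h b1 <-> exists z : int, u = bspow k a1 z /\ h = bspow k b1 z.
Proof. exact: (@main k hk gamma hgamma a1 b1 ha1 hb1 u h hu hh). Qed.
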